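(* Consider the system \[ x_{k+1} = x_k - \rho y_k + \hat g(y_k,w_k),\qquad y_{k+1} = (1-\beta)y_k + \hat h(y_{k-1},w_{k-1})\bigl(J(x_k)-J(x_{k-1})\bigr) \] with the setup described in the context. Then for every $k\ge1$, \[ \mathbb{E}[\tilde x_{k+1}]=\mathbb{E}[\tilde x_k]-\rho\,\mathbb{E}[y_k],\qquad \mathbb{E}[y_{k+1}]=(1-\beta)\mathbb{E}[y_k]+\mu\gamma\,\mathbb{E}[\tilde x_k]. \]
   Context: Setup. Parameters: $\rho>0$, $\beta\in(0,2)$, $\varepsilon>0$, $\omega>0$. The random variables $w_i$, $i\in\mathbb{N}\cup\{0\}$, are i.i.d., each taking the value $-\omega$ or $\omega$ with probability $1/2$. The functions $h,g:\mathbb{R}\to\mathbb{R}$ are odd, satisfy $\mathrm{sign}(g(w))=\mathrm{sign}(h(w))$ for all $w$, and $g(w)=h(w)=0$ if and only if $w=0$. Define $\hat h(y,w):=\frac{h(w)}{|y|+\varepsilon}$ and $\hat g(y,w):=(|y|+\varepsilon)g(w)$. The objective is $J(x)=J^*+\frac{\mu}{2}(x-x^* )^2$ with $\mu>0$, $x^*,J^*\in\mathbb{R}$. The initial data $x_0,y_0$ and the initialization $y_1$ (the $y$-update being applied for $k\ge1$) are deterministic. Notation: $\tilde x_k:=x_k-x^*$, $\gamma:=\mathbb{E}[h(w_k)g(w_k)]$. *)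

(* Defs.v *)
From mathcomp Require Import all_boot all_order all_algebra.
From mathcomp Require Import reals.
Set Implicit Arguments. Unset Strict Implicit. Unset Printing Implicit Defensive.
Import Order.TTheory GRing.Theory Num.Theory.
Local Open Scope ring_scope.

Section Defs.
Variable R : realType.

(* The noise realization determined by a sign pattern s on the first N
   indices: w_i = omega if s i, -omega otherwise (i < N); w_i = 0 for i >= N
   (irrelevant: only indices < N are ever used below). *)
Definition noise (omega : R) (N : nat) (s : {ffun 'I_N -> bool}) : nat -> R :=
  fun i => match (insub i : option 'I_N) with
           | Some j => if s j then omega else - omega
           | None => 0
           end.

(* Expectation of a functional F of the noise sequence (w_0, ..., w_{N-1}),
   w_i i.i.d. uniform on {-omega, omega}: uniform average over the 2^N
   sign patterns. *)
Definition Esign (omega : R) (N : nat) (F : (nat -> R) -> R) : R :=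
  (2 ^+ N)^-1 * \sum_(s : {ffun 'I_N -> bool}) F (@noise omega N s).

Definition gamma (omega : R) (h g : R -> R) : R :=
  Esign omega 1 (fun w => h (w 0%N) * g (w 0%N)).

Definition hhat (eps : R) (h : R -> R) (y w : R) : R := h w / (`|y| + eps).
Definition ghat (eps : R) (g : R -> R) (y w : R) : R := (`|y| + eps) * g w.

Definition Jq (Js mu xs : R) (x : R) : R := Js + mu / 2 * (x - xs) ^+ 2.

End Defs.

(* Main.v *)
Require Import Defs.
From mathcomp Require Import all_boot all_order all_algebra.
From mathcomp Require Import reals.
From mathcomp Require Import ring lra.
Import Order.TTheory GRing.Theory Num.Theory.
Local Open Scope ring_scope.

Section Aux.
Variable R : realType.
Variable omega : R.
Variable N : nat.
Implicit Types s : {ffun 'I_N -> bool}.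

Definition flip (j : nat) (s : {ffun 'I_N -> bool}) : {ffun 'I_N -> bool} :=
  [ffun i => if val i == j then ~~ s i else s i].

Lemma flipK j : involutive (flip j).
Proof.
move=> s; apply/ffunP => i; rewrite !ffunE.
by case: (val i == j) => //=; rewrite negbK.
Qed.

Lemma noise_lt s i (Hi : (i < N)%N) :
  noise omega s i = if s (Ordinal Hi) then omega else - omega.
Proof.
rewrite /noise (insubT (fun i => i < N)%N Hi) /=.
by have -> : Sub i Hi = Ordinal Hi by [].
Qed.

Lemma noise_ge s i : (N <= i)%N -> noise omega s i = 0.
Proof. by move=> Hi; rewrite /noise insubF // ltnNge Hi. Qed.

Lemma noise_flip_ne j s i : i != j -> noise omega (flip j s) i = noise omega s i.
Proof.
move=> hij; case: (ltnP i N) => Hi; last by rewrite !noise_ge.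
by rewrite !(noise_lt _ _ Hi) ffunE /= (negbTE hij).
Qed.

Lemma noise_flip_eq j s : (j < N)%N -> noise omega (flip j s) j = - noise omega s j.
Proof.
move=> Hj; rewrite !(noise_lt _ _ Hj) ffunE /= eqxx.
by case: (s _) => /=; rewrite ?opprK.
Qed.

Lemma noise_pm s j : noise omega s j = omega \/ noise omega s j = - omega \/ noise omega s j = 0.
Proof.
case: (ltnP j N) => Hj; last by right; right; rewrite noise_ge.
by rewrite (noise_lt _ _ Hj); case: (s _); auto.
Qed.

Lemma Esign_ext F G : (forall w, F w = G w) -> Esign omega N F = Esign omega N G.
Proof. by move=> H; rewrite /Esign; congr (_ * _); apply: eq_bigr => s _. Qed.

Lemma Esign_extn F G : (forall s : {ffun 'I_N -> bool}, F (noise omega s) = G (noise omega s)) -> Esign omega N F = Esign omega N G.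
Proof. by move=> H; rewrite /Esign; congr (_ * _); apply: eq_bigr => s _. Qed.

Lemma EsignD F G : Esign omega N (fun w => F w + G w) = Esign omega N F + Esign omega N G.
Proof. by rewrite /Esign big_split mulrDr. Qed.

Lemma EsignN F : Esign omega N (fun w => - F w) = - Esign omega N F.
Proof. by rewrite /Esign sumrN mulrN. Qed.

Lemma EsignZ c F : Esign omega N (fun w => c * F w) = c * Esign omega N F.
Proof. by rewrite /Esign -mulr_sumr mulrCA. Qed.

Lemma Esign_odd j f phi : (j < N)%N ->
  (forall w w', (forall i, (i < j)%N -> w i = w' i) -> f w = f w') ->
  (forall v, phi (- v) = - phi v) ->
  Esign omega N (fun w => f w * phi (w j)) = 0.
Proof.
move=> Hj Hf Hphi.
rewrite /Esign; set S := \sum_(s : {ffun 'I_N -> bool}) _.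
suff HS : S = - S.
  have -> : S = 0 by lra.
  by rewrite mulr0.
rewrite {1}/S (reindex_inj (inv_inj (flipK j))) /= /S -sumrN.
apply: eq_bigr => s _.
rewrite noise_flip_eq // Hphi mulrN; congr (- (_ * _)).
apply: Hf => i hi; apply: noise_flip_ne.
by rewrite neq_ltn hi.
Qed.

Lemma Esign_even j f psi : (j < N)%N -> psi (- omega) = psi omega ->
  Esign omega N (fun w => f w * psi (w j)) = Esign omega N f * psi omega.
Proof.
move=> Hj Hpsi; rewrite mulrC -EsignZ; apply: Esign_extn => s.
rewrite (noise_lt _ _ Hj); case: (s _); rewrite ?Hpsi.
  by rewrite mulrC.
by rewrite mulrC.
Qed.

Lemma Esign_const c : Esign omega N (fun=> c) = c.
Proof.
rewrite /Esign sumr_const card_ffun card_bool card_ord -[c *+ _]mulr_natl natrX mulrA mulVf ?mul1r //.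
by rewrite expf_neq0 // pnatr_eq0.
Qed.
End Aux.
Theorem lemma5 (R : realType) (rho beta eps omega mu xs Js : R)
  (h g : R -> R) (x0 y0 y1 : R) (x y : (nat -> R) -> nat -> R) :
  0 < rho -> 0 < beta -> beta < 2 -> 0 < eps -> 0 < omega -> 0 < mu ->
  (forall v, h (- v) = - h v) -> (forall v, g (- v) = - g v) ->
  (forall v, Num.sg (g v) = Num.sg (h v)) ->
  (forall v, g v = 0 <-> v = 0) -> (forall v, h v = 0 <-> v = 0) ->
  (forall w, x w 0%N = x0) -> (forall w, y w 0%N = y0) ->
  (forall w, y w 1%N = y1) ->
  (forall w k, x w k.+1 = x w k - rho * y w k + ghat eps g (y w k) (w k)) ->
  (forall w k, (1 <= k)%N ->
     y w k.+1 = (1 - beta) * y w k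
                + hhat eps h (y w k.-1) (w k.-1)
                  * (Jq Js mu xs (x w k) - Jq Js mu xs (x w k.-1))) ->
  forall k N : nat, (1 <= k)%N -> (k < N)%N ->
    Esign omega N (fun w => x w k.+1 - xs)
      = Esign omega N (fun w => x w k - xs) - rho * Esign omega N (fun w => y w k)
    /\
    Esign omega N (fun w => y w k.+1)
      = (1 - beta) * Esign omega N (fun w => y w k)
        + mu * gamma omega h g * Esign omega N (fun w => x w k - xs).

Proof.
move=> hrho hb1 hb2 heps hom hmu hodd godd _ _ _ hx0 hy0 hy1 hx hy k N hk hkN.
have dep : forall n w w', (forall i, (i < n)%N -> w i = w' i) ->
    (forall m, (m <= n)%N -> x w m = x w' m) /\
    (forall m, (m <= n.+1)%N -> y w m = y w' m).
  elim=> [|n IH] w w' Hw.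
    split=> m; first by rewrite leqn0 => /eqP ->; rewrite !hx0.
    by case: m => [|[|m]] // _; rewrite ?hy0 ?hy1.
  have [IHx IHy] := IH w w' (fun i hi => Hw i (ltnW hi)).
  have hxx : forall m, (m <= n.+1)%N -> x w m = x w' m.
    move=> m hm.
    rewrite leq_eqVlt in hm; case/orP: hm => [/eqP ->|hm]; last exact: IHx.
    by rewrite !hx IHx // IHy // Hw.
  split=> // m hm.
  rewrite leq_eqVlt in hm; case/orP: hm => [/eqP ->|hm]; last exact: IHy.
  rewrite (hy w n.+1) // (hy w' n.+1) //=.
  by rewrite (IHy n.+1) // (IHy n) // (hxx n.+1) // (hxx n) // Hw.
have cpos : forall w j, `|y w j| + eps != 0.
  move=> w j; have := normr_ge0 (y w j); move=> H0.
  by apply: lt0r_neq0; lra.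
split.
  rewrite (@Esign_ext _ _ _ _ (fun w => (x w k - xs) + (- (rho * y w k)) + (`|y w k| + eps) * g (w k))); last first.
    by move=> w; rewrite hx /ghat; ring.
  rewrite (EsignD _ _ _ (fun w => (x w k - xs) + (- (rho * y w k)))).
  rewrite (EsignD _ _ _ (fun w => (x w k - xs))) (EsignN _ _ _ (fun w => rho * y w k)).
  rewrite (EsignZ _ _ _ rho (fun w => y w k)).
  rewrite (@Esign_odd _ _ _ k (fun w => `|y w k| + eps)) //.
    by rewrite addr0.
  by move=> w w' H; rewrite ((dep k w w' H).2 k).
case: k hk hkN => // j _ hjN.
set psi := fun v => h v * g v.
have hpsi : psi (- omega) = psi omega by rewrite /psi hodd godd mulrNN.
have hgam : gamma omega h g = psi omega.
  rewrite /gamma (@Esign_ext _ _ _ _ (fun w => 1 * psi (w 0%N))); last by move=> w; rewrite mul1r.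
  by rewrite (@Esign_even _ _ _ 0) // Esign_const mul1r.
pose a := fun w : nat -> R => x w j - xs + - (rho * y w j).
pose c := fun w : nat -> R => `|y w j| + eps.
pose O1 := fun w : nat -> R => mu * (x w j - xs) * (- (rho * y w j)) / c w + mu * (rho * y w j) ^+ 2 / (2 * c w).
pose O2 := fun w : nat -> R => mu * c w / 2.
have depj : forall F : R -> R -> R, forall w w', (forall i, (i < j)%N -> w i = w' i) ->
    F (x w j) (y w j) = F (x w' j) (y w' j).
  by move=> F w w' H; rewrite ((dep j w w' H).1 j) // ((dep j w w' H).2 j).
have EA : Esign omega N (fun w => x w j.+1 - xs) = Esign omega N a.
  rewrite (@Esign_ext _ _ _ _ (fun w => a w + c w * g (w j))); last first.
    by move=> w; rewrite hx /ghat /a /c; ring.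
  rewrite (EsignD _ _ _ a) (@Esign_odd _ _ _ j c) ?addr0 //; first exact: ltnW.
  by move=> w w' H; rewrite /c (depj (fun _ v => `|v| + eps) w w' H).
have EB : Esign omega N (fun w => y w j.+2) =
  Esign omega N (fun w => (1 - beta) * y w j.+1 + (mu * a w) * psi (w j)
     + O1 w * h (w j) + O2 w * (g (w j) ^+ 2 * h (w j))).
  apply: Esign_ext => w.
  rewrite (hy w j.+1) //= hx /hhat /ghat /Jq /O1 /O2 /a /psi.
  have := cpos w j; rewrite -/(c w) => hc.
  by field.
have hj : (j < N)%N by exact: ltnW.
rewrite EB EA.
rewrite (EsignD _ _ _ (fun w => (1 - beta) * y w j.+1 + (mu * a w) * psi (w j) + O1 w * h (w j))).
rewrite (EsignD _ _ _ (fun w => (1 - beta) * y w j.+1 + (mu * a w) * psi (w j))).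
rewrite (EsignD _ _ _ (fun w => (1 - beta) * y w j.+1)).
rewrite (EsignZ _ _ _ (1 - beta) (fun w => y w j.+1)).
rewrite (@Esign_even _ _ _ j (fun w => mu * a w) psi) //.
rewrite (EsignZ _ _ _ mu a).
rewrite (@Esign_odd _ _ _ j O1 h) //; last first.
  by move=> w w' H; rewrite /O1 /c (depj (fun u v => mu * (u - xs) * (- (rho * v)) / (`|v| + eps) + mu * (rho * v) ^+ 2 / (2 * (`|v| + eps))) w w' H).
rewrite (@Esign_odd _ _ _ j O2 (fun v => g v ^+ 2 * h v)) //; last first.
- by move=> v; rewrite godd hodd sqrrN mulrN.
- by move=> w w' H; rewrite /O2 /c (depj (fun u v => mu * (`|v| + eps) / 2) w w' H).
rewrite hgam; ring.
Qed.
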